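(* Let $G$ be a finite group and suppose given integers $n(H,\phi)$ for all pairs $(H,\phi)$ with $H$ either a cyclic subgroup of $G$ or $H=G$, and $\phi$ a character of $H$, satisfying: (i) $n(H,\phi_1+\phi_2)=n(H,\phi_1)+n(H,\phi_2)$ for all characters $\phi_1,\phi_2$ of such $H$; (ii) $n(G,\mathrm{Ind}_H^G\phi)=n(H,\phi)$ for every cyclic subgroup $H$ and every character $\phi$ of $H$; (iii) $n(H,\phi)\ge0$ for every cyclic subgroup $H$ and every character $\phi$ of $H$. Then \[\sum_{\chi\in\mathrm{Irr}(G)}n(G,\chi)^2\le n(G,\mathrm{Reg}_G)^2.\]
   Context: $\mathrm{Irr}(G)$ is the set of irreducible complex characters of $G$, and $\mathrm{Reg}_G=\sum_{\chi\in\mathrm{Irr}(G)}\chi(1)\chi$ is the regular character. $\mathrm{Ind}_H^G$ denotes induction of characters. *)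

(* Defs.v *)
From HB Require Import structures.
From mathcomp Require Import all_boot all_order all_algebra all_fingroup all_solvable all_field all_character.
Set Implicit Arguments.
Unset Strict Implicit.
Unset Printing Implicit Defensive.

(* Main.v *)
Require Import Defs.
From HB Require Import structures.
From mathcomp Require Import all_boot all_order all_algebra all_fingroup all_solvable all_field all_character.
Import Order.TTheory GRing.Theory Num.Theory.
Local Open Scope ring_scope.

Theorem theorem5p1p3 (gT : finGroupType) (G : {group gT})
    (n : forall H : {group gT}, 'CF(H) -> int)
    (hadd_cyc : forall H : {group gT}, H \subset G -> cyclic H ->
       forall phi1 phi2 : 'CF(H), phi1 \is a character -> phi2 \is a character ->
       n H (phi1 + phi2) = n H phi1 + n H phi2)
    (hadd_G : forall phi1 phi2 : 'CF(G), phi1 \is a character -> phi2 \is a character ->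
       n G (phi1 + phi2) = n G phi1 + n G phi2)
    (hind : forall H : {group gT}, H \subset G -> cyclic H ->
       forall phi : 'CF(H), phi \is a character ->
       n G ('Ind[G, H] phi) = n H phi)
    (hpos : forall H : {group gT}, H \subset G -> cyclic H ->
       forall phi : 'CF(H), phi \is a character -> 0 <= n H phi) :
  \sum_(i : Iirr G) (n G 'chi_i) ^+ 2 <= (n G (cfReg G)) ^+ 2.
Proof.
pose b (i : Iirr G) : algC := (n G 'chi_i)%:~R.
pose beta : 'CF(G) := \sum_i b i *: 'chi_i.
have bR i : (b i)^* = b i by rewrite conj_Creal ?realz.
have dotb i : '[beta, 'chi_i] = b i.
  rewrite cfdot_suml (bigD1 i) //= big1 => [|j ji].
    by rewrite cfdotZl cfdot_irr eqxx mulr1 addr0.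
  by rewrite cfdotZl cfdot_irr (negbTE ji) mulr0.
have dotb' i : '['chi_i, beta] = b i by rewrite cfdotC dotb bR.
have n0 : n G 0 = 0.
  have := @hadd_G 0 0 (cfun0_char G) (cfun0_char G).
  rewrite addr0 -{1}[n G 0]addr0 => /addrI <-//.
have K phi : phi \is a character -> (n G phi)%:~R = '[phi, beta].
  case/char_sum_irr=> r ->; elim: r => [|i r IH].
    by rewrite !big_nil n0 cfdot0l.
  rewrite !big_cons hadd_G ?irr_char ?rpred_sum // => [|j _]; last exact: irr_char.
  by rewrite intrD IH cfdotDl dotb'.
have Res_char (H : {group gT}) : H \subset G -> cyclic H -> 'Res[H] beta \is a character.
  move=> sHG cH; apply/char_sum_irrP.
  exists (fun j => `|n H 'chi_j|%N).
  rewrite {1}[LHS]cfun_sum_cfdot; apply: eq_bigr => j _; congr (_ *: _).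
  rewrite cfdotC Frobenius_reciprocity -K ?cfInd_char ?irr_char //.
  rewrite hind ?irr_char // conj_Creal ?realz //.
  by rewrite -[in LHS](gez0_abs (hpos H sHG cH _ (irr_char j))) pmulrn.
have bnd x : x \in G -> `|beta x| <= beta 1%g.
  move=> Gx; have sXG : <[x]>%g \subset G by rewrite cycle_subG.
  have := char1_ge_norm x (Res_char _ sXG (cycle_cyclic x)).
  by rewrite !cfResE ?cycle_id ?group1.
have reg : (n G (cfReg G))%:~R = beta 1%g.
  rewrite K ?cfReg_char // cfReg_sum cfdot_suml sum_cfunE.
  apply: eq_bigr => i _; rewrite cfdotZl dotb' cfunE mulrC.
  by rewrite /b.
rewrite -(ler_int algC) rmorph_sum /= rmorphXn /= reg.
have -> : \sum_i ((n G 'chi_i) ^+ 2)%:~R = '[beta] :> algC.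
  rewrite cfdot_sum_irr; apply: eq_bigr => i _.
  by rewrite dotb bR rmorphXn.
have b1 : 0 <= beta 1%g by apply: le_trans (bnd _ (group1 G)).
rewrite (cfnormE (cfun_onG beta)).
apply: le_trans (_ : #|G|%:R^-1 * \sum_(x in G) (beta 1%g) ^+ 2 <= _).
  rewrite ler_wpM2l ?invr_ge0 ?ler0n // ler_sum // => x Gx.
  by rewrite lerXn2r ?nnegrE ?bnd.
rewrite sumr_const mulrC -[X in X * _]mulr_natr -mulrA mulfV ?mulr1 // pnatr_eq0 -lt0n cardG_gt0.
by [].
Qed.
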